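(* Let $(\mathcal H,\mathfrak A_0)$ be a Hilbert quasi *-algebra with unit $e$. Then the set $\mathcal H_b$ of bounded elements coincides with the set of universal multipliers of $\mathcal H$, i.e. $\mathcal H_b=\{\xi\in\mathcal H:\ \eta\square\xi \text{ is defined for every }\eta\in\mathcal H\}=\{\xi\in\mathcal H:\ \xi\square\eta\text{ is defined for every }\eta\in\mathcal H\}$.
   Context: A Hilbert algebra is a *-algebra $\mathfrak A_0$ with an inner product $\langle\cdot,\cdot\rangle$ such that (i) for each $x$, $y\mapsto xy$ is continuous for the inner product norm; (ii) $\langle xy,z\rangle=\langle y,x^*z\rangle$ for all $x,y,z$; (iii) $\langle x,y\rangle=\langle y^*,x^*\rangle$ for all $x,y$; (iv) the linear span of $\{xy:x,y\in\mathfrak A_0\}$ is dense in $\mathfrak A_0$. Let $\mathcal H$ be the Hilbert space completion of $\mathfrak A_0$; the involution extends isometrically to $\mathcal H$, and the products $\xi x$, $x\xi$ for $\xi\in\mathcal H$, $x\in\mathfrak A_0$ are defined by continuity. It is assumed that (A): if $\xi\in\mathcal H$ and $\xi x=0$ for all $x\in\mathfrak A_0$ then $\xi=0$. With these operations $(\mathcal H,\mathfrak A_0)$ is a Banach quasi *-algebra, called a Hilbert quasi *-algebra. A unit is $e\in\mathfrak A_0$ with $\xi e=e\xi=\xi$ for all $\xi\in\mathcal H$. For $\xi\in\mathcal H$, $L_\xi$, $R_\xi$ are the operators with domain $\mathfrak A_0$ given by $L_\xi x=\xi x$, $R_\xi x=x\xi$. $\xi$ is a bounded element if $L_\xi$ is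 bounded on $\mathfrak A_0$ (equivalently, $R_\xi$ is bounded). $\mathcal H_b$ is the set of bounded elements. Weak multiplication: $\xi$ is a left multiplier of $\eta$ if there is $\zeta\in\mathcal H$ with $\langle\eta x,\xi^*y\rangle=\langle\zeta x,y\rangle$ for all $x,y\in\mathfrak A_0$; then $\xi\square\eta:=\zeta$. *)

(* Defs.v *)
From Stdlib Require Import Reals List.
Open Scope R_scope.

Record C := mkC { Cre : R ; Cim : R }.
Definition C0 : C := mkC 0 0.
Definition C1 : C := mkC 1 0.
Definition Cadd (a b : C) : C := mkC (Cre a + Cre b) (Cim a + Cim b).
Definition Cmul (a b : C) : C :=
  mkC (Cre a * Cre b - Cim a * Cim b) (Cre a * Cim b + Cim a * Cre b).
Definition Cconj (a : C) : C := mkC (Cre a) (- Cim a).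

Definition ipnorm {H : Type} (inner : H -> H -> C) (x : H) : R :=
  sqrt (Cre (inner x x)).

(** * Hilbert quasi *-algebras (H, A0)
   H is a complex Hilbert space (inner product linear in the first variable,
   conjugate-linear in the second), A0 (a predicate on H) is a dense subspace
   which is a Hilbert algebra.  [mul] is the multiplication: on A0 x A0 it is the
   product of A0; for xi in H and x in A0, [mul xi x] and [mul x xi] are the
   products extended by continuity (values of [mul] on H x H outside this range
   are irrelevant).  [star] is the involution of A0 extended isometrically to H. *)
Record HQA := {
  H :> Type;
  hadd : H -> H -> H;
  hopp : H -> H;
  hzero : H;
  hscal : C -> H -> H;
  inner : H -> H -> C;
  star : H -> H;
  mul : H -> H -> H;
  A0 : H -> Prop;

  haddA : forall x y z, hadd x (hadd y z) = hadd (hadd x y) z;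
  haddC : forall x y, hadd x y = hadd y x;
  hadd0 : forall x, hadd x hzero = x;
  haddN : forall x, hadd x (hopp x) = hzero;
  hscal1 : forall x, hscal C1 x = x;
  hscalA : forall a b x, hscal a (hscal b x) = hscal (Cmul a b) x;
  hscalDl : forall a b x, hscal (Cadd a b) x = hadd (hscal a x) (hscal b x);
  hscalDr : forall a x y, hscal a (hadd x y) = hadd (hscal a x) (hscal a y);

  inner_addl : forall x y z, inner (hadd x y) z = Cadd (inner x z) (inner y z);
  inner_scall : forall a x y, inner (hscal a x) y = Cmul a (inner x y);
  inner_conj : forall x y, inner y x = Cconj (inner x y);
  inner_pos : forall x, 0 <= Cre (inner x x);
  inner_def : forall x, inner x x = C0 -> x = hzero;

  complete : forall u : nat -> H,
    (forall eps, 0 < eps -> exists N, forall m n, (N <= m)%nat -> (N <= n)%nat ->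
        ipnorm inner (hadd (u m) (hopp (u n))) < eps) ->
    exists l, forall eps, 0 < eps -> exists N, forall n, (N <= n)%nat ->
        ipnorm inner (hadd (u n) (hopp l)) < eps;

  A0_zero : A0 hzero;
  A0_add : forall x y, A0 x -> A0 y -> A0 (hadd x y);
  A0_scal : forall a x, A0 x -> A0 (hscal a x);
  A0_dense : forall xi eps, 0 < eps ->
    exists x, A0 x /\ ipnorm inner (hadd xi (hopp x)) < eps;

  A0_mul : forall x y, A0 x -> A0 y -> A0 (mul x y);
  A0_star : forall x, A0 x -> A0 (star x);
  mulA : forall x y z, A0 x -> A0 y -> A0 z -> mul x (mul y z) = mul (mul x y) z;
  mul_addl_A0 : forall x y z, A0 x -> A0 y -> A0 z ->
    mul (hadd x y) z = hadd (mul x z) (mul y z);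
  mul_addr_A0 : forall x y z, A0 x -> A0 y -> A0 z ->
    mul x (hadd y z) = hadd (mul x y) (mul x z);
  mul_scall_A0 : forall a x y, A0 x -> A0 y -> mul (hscal a x) y = hscal a (mul x y);
  mul_scalr_A0 : forall a x y, A0 x -> A0 y -> mul x (hscal a y) = hscal a (mul x y);
  star_mul_A0 : forall x y, A0 x -> A0 y -> star (mul x y) = mul (star y) (star x);

  star_add : forall x y, star (hadd x y) = hadd (star x) (star y);
  star_scal : forall a x, star (hscal a x) = hscal (Cconj a) (star x);
  star_star : forall x, star (star x) = x;
  star_iso : forall x, ipnorm inner (star x) = ipnorm inner x;

  ha_cont : forall x, A0 x -> exists K, forall y, A0 y ->
    ipnorm inner (mul x y) <= K * ipnorm inner y;
  ha_adj : forall x y z, A0 x -> A0 y -> A0 z ->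
    inner (mul x y) z = inner y (mul (star x) z);
  ha_star : forall x y, A0 x -> A0 y -> inner x y = inner (star y) (star x);
  ha_span : forall x eps, A0 x -> 0 < eps ->
    exists l : list (H * H),
      (forall p, In p l -> A0 (fst p) /\ A0 (snd p)) /\
      ipnorm inner (hadd x (hopp (fold_right (fun p s => hadd (mul (fst p) (snd p)) s)
                                                hzero l))) < eps;

  mul_ext_bound : forall x, A0 x -> exists K, forall xi,
    ipnorm inner (mul xi x) <= K * ipnorm inner xi /\
    ipnorm inner (mul x xi) <= K * ipnorm inner xi;
  mul_ext_addl : forall x xi eta, A0 x -> mul (hadd xi eta) x = hadd (mul xi x) (mul eta x);
  mul_ext_addr : forall x xi eta, A0 x -> mul x (hadd xi eta) = hadd (mul x xi) (mul x eta);
  mul_ext_scall : forall a x xi, A0 x -> mul (hscal a xi) x = hscal a (mul xi x);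
  mul_ext_scalr : forall a x xi, A0 x -> mul x (hscal a xi) = hscal a (mul x xi);

  cond_A : forall xi, (forall x, A0 x -> mul xi x = hzero) -> xi = hzero
}.

Arguments hadd {_}. Arguments hopp {_}. Arguments hzero {_}. Arguments hscal {_}.
Arguments inner {_}. Arguments star {_}. Arguments mul {_}. Arguments A0 {_}.

Definition hnorm {A : HQA} (x : A) : R := ipnorm inner x.

Definition is_unit (A : HQA) (e : A) : Prop :=
  A0 e /\ forall xi : A, mul xi e = xi /\ mul e xi = xi.

Definition bounded_elt (A : HQA) (xi : A) : Prop :=
  exists K, forall x : A, A0 x -> hnorm (mul xi x) <= K * hnorm x.

(** Weak multiplication: xi is a left multiplier of eta (xi [] eta defined). *)
Definition left_mult (A : HQA) (xi eta : A) : Prop :=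
  exists zeta : A, forall x y : A, A0 x -> A0 y ->
    inner (mul eta x) (mul (star xi) y) = inner (mul zeta x) y.

(* Main.v *)
Require Import Defs.
From Stdlib Require Import Reals List Lra Lia Psatz ClassicalEpsilon Classical.
Import Defs.
Open Scope R_scope.

Lemma Cext (a b : C) : Cre a = Cre b -> Cim a = Cim b -> a = b.
Proof. destruct a, b; simpl; intros; subst; reflexivity. Qed.

Ltac Csolve := apply Cext; unfold Cadd, Cmul, Cconj, C0, C1; simpl; ring.

Notation "x -h y" := (hadd x (hopp y)) (at level 50, left associativity).


Lemma hadd0l {A : HQA} (x : A) : hadd hzero x = x.
Proof. rewrite haddC; apply hadd0. Qed.

Lemma hcancel {A : HQA} (z x y : A) : hadd z x = hadd z y -> x = y.
Proof.
  intro H. assert (E : hadd (hopp z) (hadd z x) = hadd (hopp z) (hadd z y)) by (rewrite H; auto).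
  rewrite !haddA in E. rewrite (haddC _ (hopp z) z), haddN, !hadd0l in E. exact E.
Qed.

Lemma hscal0 {A : HQA} (x : A) : hscal C0 x = hzero.
Proof.
  apply (hcancel (hscal C0 x)). rewrite hadd0, <- hscalDl.
  f_equal. Csolve.
Qed.

Lemma hopp_scal {A : HQA} (x : A) : hopp x = hscal (mkC (-1) 0) x.
Proof.
  apply (hcancel x). rewrite haddN. rewrite <- (hscal1 _ x) at 1.
  rewrite <- hscalDl. rewrite <- (hscal0 x). f_equal. Csolve.
Qed.

Lemma hscal_zero {A : HQA} (a : C) : hscal a (@hzero A) = hzero.
Proof.
  apply (hcancel (hscal a hzero)). rewrite <- hscalDr, !hadd0. auto.
Qed.

Lemma hopp_add {A : HQA} (x y : A) : hopp (hadd x y) = hadd (hopp x) (hopp y).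
Proof. rewrite !hopp_scal, hscalDr. auto. Qed.

Lemma hopp_hopp {A : HQA} (x : A) : hopp (hopp x) = x.
Proof. rewrite !hopp_scal, hscalA. rewrite <- (hscal1 _ x) at 2. f_equal. Csolve. Qed.

Lemma hopp_zero {A : HQA} : hopp (@hzero A) = hzero.
Proof. rewrite hopp_scal; apply hscal_zero. Qed.

Lemma hadd4 {A : HQA} (a b c d : A) : hadd (hadd a b) (hadd c d) = hadd (hadd a c) (hadd b d).
Proof.
  rewrite <- !haddA. f_equal. rewrite !haddA. f_equal. apply haddC.
Qed.

Lemma hsub_split {A : HQA} (a b c : A) : a -h b = hadd (a -h c) (c -h b).
Proof.
  rewrite (haddC _ c (hopp b)), hadd4, (haddC _ (hopp c) c), haddN, hadd0. auto.
Qed.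

Lemma hsub_add {A : HQA} (a b c d : A) : hadd a b -h hadd c d = hadd (a -h c) (b -h d).
Proof. rewrite hopp_add, hadd4. auto. Qed.

Lemma hsub_sub {A : HQA} (a b c d : A) : (a -h b) -h (c -h d) = (a -h c) -h (b -h d).
Proof. rewrite hsub_add, !hopp_add. auto. Qed.

Lemma hsub_eq {A : HQA} (a b : A) : a -h b = hzero -> a = b.
Proof.
  intro H. assert (E : hadd (a -h b) b = hadd hzero b) by (rewrite H; auto).
  rewrite <- haddA, (haddC _ (hopp b) b), haddN, hadd0, hadd0l in E. exact E.
Qed.

Lemma hsub_swap {A : HQA} (a b : A) : b -h a = hopp (a -h b).
Proof. rewrite hopp_add, hopp_hopp, haddC. auto. Qed.

Lemma hsub_scal {A : HQA} (a : C) (x y : A) : hscal a x -h hscal a y = hscal a (x -h y).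
Proof. rewrite hscalDr, !hopp_scal, !hscalA. f_equal. f_equal. Csolve. Qed.

Lemma inner_addr {A : HQA} (x y z : A) : inner x (hadd y z) = Cadd (inner x y) (inner x z).
Proof.
  rewrite (inner_conj _ (hadd y z) x), inner_addl, (inner_conj _ y x), (inner_conj _ z x). Csolve.
Qed.

Lemma inner_scalr {A : HQA} (a : C) (x y : A) : inner x (hscal a y) = Cmul (Cconj a) (inner x y).
Proof.
  rewrite (inner_conj _ (hscal a y) x), inner_scall, (inner_conj _ y x). Csolve.
Qed.

Lemma inner_oppl {A : HQA} (x y : A) : inner (hopp x) y = Cmul (mkC (-1) 0) (inner x y).
Proof. rewrite hopp_scal, inner_scall. auto. Qed.

Lemma inner_oppr {A : HQA} (x y : A) : inner x (hopp y) = Cmul (mkC (-1) 0) (inner x y).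
Proof. rewrite hopp_scal, inner_scalr. f_equal. Csolve. Qed.

Lemma inner_zerol {A : HQA} (y : A) : inner hzero y = C0.
Proof. rewrite <- (hscal0 y) at 1. rewrite inner_scall. Csolve. Qed.

Lemma inner_zeror {A : HQA} (y : A) : inner y hzero = C0.
Proof. rewrite (inner_conj _ hzero y), inner_zerol. Csolve. Qed.

Lemma Re_subl {A : HQA} (x y z : A) : Cre (inner (x -h y) z) = Cre (inner x z) - Cre (inner y z).
Proof. rewrite inner_addl, inner_oppl. unfold Cadd, Cmul; simpl; ring. Qed.
Lemma Im_subl {A : HQA} (x y z : A) : Cim (inner (x -h y) z) = Cim (inner x z) - Cim (inner y z).
Proof. rewrite inner_addl, inner_oppl. unfold Cadd, Cmul; simpl; ring. Qed.
Lemma Re_subr {A : HQA} (x y z : A) : Cre (inner z (x -h y)) = Cre (inner z x) - Cre (inner z y).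
Proof. rewrite inner_addr, inner_oppr. unfold Cadd, Cmul; simpl; ring. Qed.
Lemma Im_subr {A : HQA} (x y z : A) : Cim (inner z (x -h y)) = Cim (inner z x) - Cim (inner z y).
Proof. rewrite inner_addr, inner_oppr. unfold Cadd, Cmul; simpl; ring. Qed.

Lemma Re_addl {A : HQA} (x y z : A) : Cre (inner (hadd x y) z) = Cre (inner x z) + Cre (inner y z).
Proof. rewrite inner_addl. reflexivity. Qed.
Lemma Re_addr {A : HQA} (x y z : A) : Cre (inner z (hadd x y)) = Cre (inner z x) + Cre (inner z y).
Proof. rewrite inner_addr. reflexivity. Qed.

Lemma Re_scall {A : HQA} (t : R) (x y : A) : Cre (inner (hscal (mkC t 0) x) y) = t * Cre (inner x y).
Proof. rewrite inner_scall. unfold Cmul; simpl; ring. Qed.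
Lemma Re_scalr {A : HQA} (t : R) (x y : A) : Cre (inner y (hscal (mkC t 0) x)) = t * Cre (inner y x).
Proof. rewrite inner_scalr. unfold Cmul, Cconj; simpl; ring. Qed.

Lemma Re_sym {A : HQA} (x y : A) : Cre (inner x y) = Cre (inner y x).
Proof. rewrite (inner_conj _ x y). reflexivity. Qed.

Lemma Im_self {A : HQA} (x : A) : Cim (inner x x) = 0.
Proof. pose proof (inner_conj _ x x) as E. apply (f_equal Cim) in E. unfold Cconj in E; simpl in E. lra. Qed.

Lemma Im_as_Re {A : HQA} (x y : A) : Cim (inner x y) = Cre (inner x (hscal (mkC 0 1) y)).
Proof. rewrite inner_scalr. unfold Cmul, Cconj; simpl; ring. Qed.

Definition nrm {A : HQA} (x : A) := hnorm x.

Lemma hnorm_ge0 {A : HQA} (x : A) : 0 <= hnorm x.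
Proof. apply sqrt_pos. Qed.

Lemma hnorm_sq {A : HQA} (x : A) : hnorm x * hnorm x = Cre (inner x x).
Proof. apply sqrt_sqrt. apply inner_pos. Qed.

Lemma hnorm_zero {A : HQA} (x : A) : hnorm x = 0 -> x = hzero.
Proof.
  intro H. apply inner_def. apply Cext; simpl.
  - rewrite <- hnorm_sq, H. ring.
  - apply Im_self.
Qed.

Lemma hnorm_hzero {A : HQA} : hnorm (@hzero A) = 0.
Proof. unfold hnorm, ipnorm. rewrite inner_zerol. simpl. apply sqrt_0. Qed.

Lemma sq_eq (a b : R) : 0 <= a -> 0 <= b -> a * a = b * b -> a = b.
Proof. intros. nra. Qed.

Lemma sq_le (a b : R) : 0 <= b -> a * a <= b * b -> a <= b.
Proof. intros. nra. Qed.

Lemma hnorm_scal {A : HQA} (t : R) (x : A) : hnorm (hscal (mkC t 0) x) = Rabs t * hnorm x.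
Proof.
  apply sq_eq. apply hnorm_ge0. apply Rmult_le_pos. apply Rabs_pos. apply hnorm_ge0.
  rewrite hnorm_sq, Re_scall, Re_scalr.
  replace (Rabs t * hnorm x * (Rabs t * hnorm x)) with ((Rabs t * Rabs t) * (hnorm x * hnorm x)) by ring.
  rewrite hnorm_sq, <- Rabs_mult, Rabs_right by nra. ring.
Qed.

Lemma hnorm_opp {A : HQA} (x : A) : hnorm (hopp x) = hnorm x.
Proof. rewrite hopp_scal, hnorm_scal. rewrite Rabs_left by lra. ring. Qed.

Lemma hnorm_sub_sym {A : HQA} (x y : A) : hnorm (x -h y) = hnorm (y -h x).
Proof. rewrite (hsub_swap x y), hnorm_opp. auto. Qed.

Lemma hnorm_i {A : HQA} (x : A) : hnorm (hscal (mkC 0 1) x) = hnorm x.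
Proof.
  unfold hnorm, ipnorm. f_equal. rewrite inner_scall, inner_scalr.
  unfold Cmul, Cconj; simpl. ring.
Qed.

Lemma Re_expand {A : HQA} (x y : A) :
  Cre (inner (hadd x y) (hadd x y)) = Cre (inner x x) + 2 * Cre (inner x y) + Cre (inner y y).
Proof. rewrite !Re_addl, !Re_addr, (Re_sym y x). ring. Qed.

Lemma CS_re {A : HQA} (x y : A) : Rabs (Cre (inner x y)) <= hnorm x * hnorm y.
Proof.
  destruct (Req_dec (hnorm y) 0) as [Hy|Hy].
  - rewrite (hnorm_zero y Hy), inner_zeror. simpl. rewrite Rabs_R0. rewrite hnorm_hzero. lra.
  - set (b := hnorm y) in *. set (a := hnorm x). set (r := Cre (inner x y)).
    assert (Hb : 0 < b) by (pose proof (hnorm_ge0 y); unfold b in *; lra).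
    pose (t := - r / (b * b)).
    pose proof (inner_pos _ (hadd x (hscal (mkC t 0) y))) as P.
    rewrite Re_expand, Re_scalr, Re_scall, Re_scalr in P.
    rewrite <- !hnorm_sq in P. fold a b r in P.
    assert (Q : r * r <= (a * b) * (a * b)).
    { assert (E : a * a + 2 * (t * r) + t * (t * (b * b)) = a * a - (r * r) / (b * b))
        by (unfold t; field; lra).
      assert (E2 : (r * r) / (b * b) * (b * b) = r * r) by (field; lra).
      rewrite E in P.
      assert (0 < b * b) by nra.
      assert (r * r / (b * b) * (b * b) <= a * a * (b * b)) by (apply Rmult_le_compat_r; lra).
      nra. }
    assert (0 <= a) by (unfold a; apply hnorm_ge0).
    assert (0 <= a * b) by nra.
    apply Rabs_le. split.
    + destruct (Rle_dec (-(a*b)) r); auto. nra.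
    + destruct (Rle_dec r (a*b)); auto. nra.
Qed.

Lemma CS_im {A : HQA} (x y : A) : Rabs (Cim (inner x y)) <= hnorm x * hnorm y.
Proof. rewrite Im_as_Re, <- (hnorm_i y). apply CS_re. Qed.

Lemma hnorm_tri {A : HQA} (x y : A) : hnorm (hadd x y) <= hnorm x + hnorm y.
Proof.
  apply sq_le. pose proof (hnorm_ge0 x); pose proof (hnorm_ge0 y); lra.
  rewrite hnorm_sq, Re_expand, <- !hnorm_sq.
  pose proof (CS_re x y) as H. pose proof (Rle_abs (Cre (inner x y))). nra.
Qed.

Lemma hnorm_sub_tri {A : HQA} (a b c : A) : hnorm (a -h b) <= hnorm (a -h c) + hnorm (c -h b).
Proof. rewrite (hsub_split a b c). apply hnorm_tri. Qed.

Lemma eps_le (a b : R) : (forall eps, 0 < eps -> a <= b + eps) -> a <= b.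
Proof.
  intro H. destruct (Rle_dec a b) as [|n]; auto.
  specialize (H ((a - b)/2)). lra.
Qed.

Definition Lip {A : HQA} (f : A -> A) :=
  exists K, 0 <= K /\ forall u w, hnorm (f u -h f w) <= K * hnorm (u -h w).
Definition RLip {A : HQA} (F : A -> R) :=
  exists K, 0 <= K /\ forall u w, Rabs (F u - F w) <= K * hnorm (u -h w).

Lemma EXT_H {A : HQA} (f g : A -> A) : Lip f -> Lip g ->
  (forall x, A0 x -> f x = g x) -> forall xi, f xi = g xi.
Proof.
  intros [K1 [HK1 L1]] [K2 [HK2 L2]] E xi.
  apply hsub_eq, hnorm_zero. apply Rle_antisym; [|apply hnorm_ge0].
  apply eps_le. intros eps Heps.
  destruct (A0_dense _ xi (eps / (K1 + K2 + 1))) as [x [Hx Hd]].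
  { apply Rdiv_lt_0_compat; lra. }
  change (hnorm (xi -h x) < eps / (K1 + K2 + 1)) in Hd.
  assert (Hp : 0 < eps / (K1 + K2 + 1)) by (apply Rdiv_lt_0_compat; lra).
  pose proof (hnorm_sub_tri (f xi) (g xi) (f x)) as T.
  rewrite (E x Hx) in T.
  pose proof (L1 xi x) as H1'. pose proof (L2 x xi) as H2'. rewrite (hnorm_sub_sym x xi) in H2'.
  assert (Hb : (K1 + K2) * hnorm (xi -h x) <= eps).
  { apply Rle_trans with ((K1 + K2 + 1) * (eps / (K1 + K2 + 1))).
    - pose proof (hnorm_ge0 (xi -h x)). nra.
    - right. field. lra. }
  rewrite (E x Hx) in H1'. lra.
Qed.

Lemma EXT_R {A : HQA} (F G : A -> R) : RLip F -> RLip G ->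
  (forall x, A0 x -> F x = G x) -> forall xi, F xi = G xi.
Proof.
  intros [K1 [HK1 L1]] [K2 [HK2 L2]] E xi.
  enough (Rabs (F xi - G xi) <= 0) by (pose proof (Rle_abs (F xi - G xi));
    pose proof (Rle_abs (-(F xi - G xi))); rewrite Rabs_Ropp in *; lra).
  apply eps_le. intros eps Heps.
  destruct (A0_dense _ xi (eps / (K1 + K2 + 1))) as [x [Hx Hd]].
  { apply Rdiv_lt_0_compat; lra. }
  change (hnorm (xi -h x) < eps / (K1 + K2 + 1)) in Hd.
  assert (Hp : 0 < eps / (K1 + K2 + 1)) by (apply Rdiv_lt_0_compat; lra).
  pose proof (L1 xi x) as H1'. pose proof (L2 x xi) as H2'. rewrite (hnorm_sub_sym x xi) in H2'.
  assert (Hb : (K1 + K2) * hnorm (xi -h x) <= eps).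
  { apply Rle_trans with ((K1 + K2 + 1) * (eps / (K1 + K2 + 1))).
    - pose proof (hnorm_ge0 (xi -h x)). nra.
    - right. field. lra. }
  replace (F xi - G xi) with ((F xi - F x) + (G x - G xi)) by (rewrite (E x Hx); ring).
  eapply Rle_trans. apply Rabs_triang. lra.
Qed.

Lemma EXT_C {A : HQA} (F G : A -> C) :
  RLip (fun u => Cre (F u)) -> RLip (fun u => Cim (F u)) ->
  RLip (fun u => Cre (G u)) -> RLip (fun u => Cim (G u)) ->
  (forall x, A0 x -> F x = G x) -> forall xi, F xi = G xi.
Proof.
  intros H1 H2 H3 H4 E xi. apply Cext.
  - apply (EXT_R (fun u => Cre (F u)) (fun u => Cre (G u))); auto. intros; rewrite E; auto.
  - apply (EXT_R (fun u => Cim (F u)) (fun u => Cim (G u))); auto. intros; rewrite E; auto.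
Qed.

Lemma Lip_id {A : HQA} : Lip (fun u : A => u).
Proof. exists 1. split. lra. intros; lra. Qed.

Lemma Lip_comp {A : HQA} (f g : A -> A) : Lip f -> Lip g -> Lip (fun u => f (g u)).
Proof.
  intros [K1 [HK1 L1]] [K2 [HK2 L2]]. exists (K1 * K2). split. nra.
  intros u w. eapply Rle_trans. apply L1. rewrite Rmult_assoc. apply Rmult_le_compat_l; auto.
Qed.

Lemma Lip_sub {A : HQA} (f g : A -> A) : Lip f -> Lip g -> Lip (fun u => f u -h g u).
Proof.
  intros [K1 [HK1 L1]] [K2 [HK2 L2]]. exists (K1 + K2). split. lra.
  intros u w. rewrite hsub_sub. eapply Rle_trans. apply hnorm_tri. rewrite hnorm_opp.
  specialize (L1 u w); specialize (L2 u w). lra.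
Qed.

Lemma star_opp {A : HQA} (x : A) : star (hopp x) = hopp (star x).
Proof. rewrite !hopp_scal, star_scal. f_equal. Csolve. Qed.

Lemma star_sub {A : HQA} (x y : A) : star (x -h y) = star x -h star y.
Proof. rewrite star_add, star_opp. auto. Qed.

Lemma Lip_star {A : HQA} : Lip (fun u : A => star u).
Proof. exists 1. split. lra. intros. rewrite <- star_sub. unfold hnorm. rewrite star_iso. lra. Qed.

Lemma mul_subl {A : HQA} (a u w : A) : A0 a -> mul (u -h w) a = mul u a -h mul w a.
Proof. intro Ha. rewrite mul_ext_addl, !hopp_scal, mul_ext_scall; auto. Qed.

Lemma mul_subr {A : HQA} (a u w : A) : A0 a -> mul a (u -h w) = mul a u -h mul a w.
Proof. intro Ha. rewrite mul_ext_addr, !hopp_scal, mul_ext_scalr; auto. Qed.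

Lemma Lip_mulr {A : HQA} (a : A) : A0 a -> Lip (fun u => mul u a).
Proof.
  intro Ha. destruct (mul_ext_bound _ a Ha) as [K HK]. exists (Rmax K 0). split. apply Rmax_r.
  intros u w. rewrite <- mul_subl by auto. destruct (HK (u -h w)) as [H1 _].
  eapply Rle_trans. apply H1. apply Rmult_le_compat_r. apply hnorm_ge0. apply Rmax_l.
Qed.

Lemma Lip_mull {A : HQA} (a : A) : A0 a -> Lip (fun u => mul a u).
Proof.
  intro Ha. destruct (mul_ext_bound _ a Ha) as [K HK]. exists (Rmax K 0). split. apply Rmax_r.
  intros u w. rewrite <- mul_subr by auto. destruct (HK (u -h w)) as [_ H1].
  eapply Rle_trans. apply H1. apply Rmult_le_compat_r. apply hnorm_ge0. apply Rmax_l.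
Qed.

Lemma RLip_Re_l {A : HQA} (f : A -> A) (c : A) : Lip f -> RLip (fun u => Cre (inner (f u) c)).
Proof.
  intros [K [HK L]]. exists (K * hnorm c). split. pose proof (hnorm_ge0 c); nra.
  intros u w. rewrite <- Re_subl. eapply Rle_trans. apply CS_re.
  specialize (L u w). pose proof (hnorm_ge0 c). nra.
Qed.
Lemma RLip_Im_l {A : HQA} (f : A -> A) (c : A) : Lip f -> RLip (fun u => Cim (inner (f u) c)).
Proof.
  intros [K [HK L]]. exists (K * hnorm c). split. pose proof (hnorm_ge0 c); nra.
  intros u w. rewrite <- Im_subl. eapply Rle_trans. apply CS_im.
  specialize (L u w). pose proof (hnorm_ge0 c). nra.
Qed.
Lemma RLip_Re_r {A : HQA} (f : A -> A) (c : A) : Lip f -> RLip (fun u => Cre (inner c (f u))).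
Proof.
  intros [K [HK L]]. exists (K * hnorm c). split. pose proof (hnorm_ge0 c); nra.
  intros u w. rewrite <- Re_subr. eapply Rle_trans. apply CS_re.
  specialize (L u w). pose proof (hnorm_ge0 c). nra.
Qed.
Lemma RLip_Im_r {A : HQA} (f : A -> A) (c : A) : Lip f -> RLip (fun u => Cim (inner c (f u))).
Proof.
  intros [K [HK L]]. exists (K * hnorm c). split. pose proof (hnorm_ge0 c); nra.
  intros u w. rewrite <- Im_subr. eapply Rle_trans. apply CS_im.
  specialize (L u w). pose proof (hnorm_ge0 c). nra.
Qed.

Lemma EXT_inner {A : HQA} (f1 f2 : A -> A) (c1 c2 : A) (side1 side2 : bool) :
  Lip f1 -> Lip f2 ->
  (forall x, A0 x -> (if side1 then inner (f1 x) c1 else inner c1 (f1 x)) =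
                     (if side2 then inner (f2 x) c2 else inner c2 (f2 x))) ->
  forall xi, (if side1 then inner (f1 xi) c1 else inner c1 (f1 xi)) =
             (if side2 then inner (f2 xi) c2 else inner c2 (f2 xi)).
Proof.
  intros L1 L2 E. apply (EXT_C (fun xi => if side1 then inner (f1 xi) c1 else inner c1 (f1 xi))
                          (fun xi => if side2 then inner (f2 xi) c2 else inner c2 (f2 xi))); auto.
  - destruct side1; [apply RLip_Re_l|apply RLip_Re_r]; auto.
  - destruct side1; [apply RLip_Im_l|apply RLip_Im_r]; auto.
  - destruct side2; [apply RLip_Re_l|apply RLip_Re_r]; auto.
  - destruct side2; [apply RLip_Im_l|apply RLip_Im_r]; auto.
Qed.

Lemma A0_opp {A : HQA} (x : A) : A0 x -> A0 (hopp x).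
Proof. intro; rewrite hopp_scal; apply A0_scal; auto. Qed.
Lemma A0_sub {A : HQA} (x y : A) : A0 x -> A0 y -> A0 (x -h y).
Proof. intros; apply A0_add; auto; apply A0_opp; auto. Qed.

Lemma F1 {A : HQA} (xi a b : A) : A0 a -> A0 b -> mul xi (a -h b) = mul xi a -h mul xi b.
Proof.
  intros Ha Hb. revert xi.
  apply (EXT_H (fun xi => mul xi (a -h b)) (fun xi => mul xi a -h mul xi b)).
  - apply Lip_mulr, A0_sub; auto.
  - apply Lip_sub; apply Lip_mulr; auto.
  - intros x Hx. rewrite mul_addr_A0 by (auto; apply A0_opp; auto).
    rewrite !hopp_scal, mul_scalr_A0; auto.
Qed.

Lemma F2 {A : HQA} (xi a b : A) : A0 a -> A0 b -> mul (a -h b) xi = mul a xi -h mul b xi.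
Proof.
  intros Ha Hb. revert xi.
  apply (EXT_H (fun xi => mul (a -h b) xi) (fun xi => mul a xi -h mul b xi)).
  - apply Lip_mull, A0_sub; auto.
  - apply Lip_sub; apply Lip_mull; auto.
  - intros x Hx. rewrite mul_addl_A0 by (auto; apply A0_opp; auto).
    rewrite !hopp_scal, mul_scall_A0; auto.
Qed.

Lemma F3 {A : HQA} (xi a x : A) : A0 a -> A0 x -> mul (mul xi a) x = mul xi (mul a x).
Proof.
  intros Ha Hx. revert xi.
  apply (EXT_H (fun xi => mul (mul xi a) x) (fun xi => mul xi (mul a x))).
  - apply (Lip_comp (fun u => mul u x) (fun u => mul u a)); apply Lip_mulr; auto.
  - apply Lip_mulr, A0_mul; auto.
  - intros y Hy. rewrite mulA; auto.
Qed.

Lemma F4 {A : HQA} (xi a x : A) : A0 a -> A0 x -> mul (mul a xi) x = mul a (mul xi x).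
Proof.
  intros Ha Hx. revert xi.
  apply (EXT_H (fun xi => mul (mul a xi) x) (fun xi => mul a (mul xi x))).
  - apply (Lip_comp (fun u => mul u x) (fun u => mul a u)); [apply Lip_mulr|apply Lip_mull]; auto.
  - apply (Lip_comp (fun u => mul a u) (fun u => mul u x)); [apply Lip_mull|apply Lip_mulr]; auto.
  - intros y Hy. rewrite mulA; auto.
Qed.

Lemma F5 {A : HQA} (xi x y : A) : A0 x -> A0 y -> inner (mul xi x) y = inner x (mul (star xi) y).
Proof.
  intros Hx Hy. revert xi.
  pose proof (EXT_inner (fun u => mul u x) (fun u => mul (star u) y) y x true false) as E.
  simpl in E. apply E.
  - apply Lip_mulr; auto.
  - apply (Lip_comp (fun u => mul u y) (fun u => star u)). apply Lip_mulr; auto. apply Lip_star.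
  - intros z Hz. apply ha_adj; auto.
Qed.

Lemma F6 {A : HQA} (a z y : A) : A0 a -> A0 y -> inner (mul a z) y = inner z (mul (star a) y).
Proof.
  intros Ha Hy. revert z.
  pose proof (EXT_inner (fun u => mul a u) (fun u => u) y (mul (star a) y) true true) as E.
  simpl in E. apply E.
  - apply Lip_mull; auto.
  - apply Lip_id.
  - intros z Hz. apply ha_adj; auto.
Qed.

Lemma F7 {A : HQA} (a xi : A) : A0 a -> star (mul a xi) = mul (star xi) (star a).
Proof.
  intros Ha. revert xi.
  apply (EXT_H (fun xi => star (mul a xi)) (fun xi => mul (star xi) (star a))).
  - apply (Lip_comp (fun u => star u) (fun u => mul a u)). apply Lip_star. apply Lip_mull; auto.
  - apply (Lip_comp (fun u => mul u (star a)) (fun u => star u)). apply Lip_mulr, A0_star; auto.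
    apply Lip_star.
  - intros x Hx. apply star_mul_A0; auto.
Qed.

Lemma rightadj {A : HQA} (p q y : A) : A0 p -> A0 q -> A0 y ->
  inner (mul p q) y = inner p (mul y (star q)).
Proof.
  intros Hp Hq Hy.
  rewrite (ha_star _ (mul p q) y) by (auto; apply A0_mul; auto).
  rewrite star_mul_A0 by auto.
  rewrite (inner_conj _ (mul (star q) (star p)) (star y)).
  rewrite ha_adj by (auto; apply A0_star; auto). rewrite star_star.
  rewrite (ha_star _ p (mul y (star q))) by (auto; apply A0_mul; auto; apply A0_star; auto).
  rewrite star_mul_A0 by (auto; apply A0_star; auto). rewrite star_star.
  rewrite (inner_conj _ (star p) (mul q (star y))). reflexivity.
Qed.

Lemma F8 {A : HQA} (xi eta y : A) : A0 y ->
  inner xi (mul (star eta) y) = inner eta (mul y (star xi)).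
Proof.
  intros Hy.
  assert (S2 : forall eta, A0 eta -> forall xi, inner xi (mul (star eta) y) = inner eta (mul y (star xi))).
  { intros e He.
    pose proof (EXT_inner (fun u => u) (fun u => mul y (star u)) (mul (star e) y) e true false) as E.
    simpl in E. apply E.
    - apply Lip_id.
    - apply (Lip_comp (fun u => mul y u) (fun u => star u)). apply Lip_mull; auto. apply Lip_star.
    - intros x Hx. rewrite <- ha_adj by auto. apply rightadj; auto. }
  revert eta.
  pose proof (EXT_inner (fun u => mul (star u) y) (fun u => u) xi (mul y (star xi)) false true) as E.
  simpl in E. apply E.
  - apply (Lip_comp (fun u => mul u y) (fun u => star u)). apply Lip_mulr; auto. apply Lip_star.
  - apply Lip_id.
  - intros x Hx. apply S2; auto.
Qed.

Lemma hnorm_star {A : HQA} (x : A) : hnorm (star x) = hnorm x.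
Proof. unfold hnorm. apply star_iso. Qed.

Lemma hnorm_le_sub {A : HQA} (x v : A) : hnorm x <= hnorm v + hnorm (v -h x).
Proof.
  assert (E : x = hadd v (x -h v)).
  { rewrite (haddC _ v), <- haddA, (haddC _ (hopp v) v), haddN, hadd0. auto. }
  rewrite E at 1. rewrite <- (hnorm_sub_sym x v). apply hnorm_tri.
Qed.

Lemma NORMDUAL {A : HQA} (v : A) (M : R) : 0 <= M ->
  (forall x, A0 x -> Cre (inner v x) <= M * hnorm x) -> hnorm v <= M.
Proof.
  intros HM H. set (n := hnorm v). assert (Hn : 0 <= n) by apply hnorm_ge0.
  assert (Q : n * n <= M * n).
  { apply eps_le. intros eps Heps.
    set (d := eps / (M + n + 1)).
    assert (Hd : 0 < d) by (apply Rdiv_lt_0_compat; lra).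
    destruct (A0_dense _ v d Hd) as [x [Hx Hvx]].
    change (hnorm (v -h x) < d) in Hvx.
    pose proof (H x Hx) as H1.
    pose proof (hnorm_le_sub x v) as H2.
    pose proof (CS_re v (v -h x)) as H3. pose proof (Rle_abs (Cre (inner v (v -h x)))) as H4.
    rewrite Re_subr in H3, H4.
    assert (Ed : (M + n) * d <= eps).
    { apply Rle_trans with ((M + n + 1) * d).
      apply Rmult_le_compat_r; lra. unfold d; right; field; lra. }
    rewrite <- hnorm_sq in H3, H4. fold n in H2, H3, H4.
    pose proof (hnorm_ge0 x). pose proof (hnorm_ge0 (v -h x)).
    assert (M * hnorm x <= M * (n + hnorm (v -h x))) by (apply Rmult_le_compat_l; lra).
    assert ((M + n) * hnorm (v -h x) <= (M + n) * d) by (apply Rmult_le_compat_l; lra).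
    nra. }
  nra.
Qed.

Lemma bounded_nonneg (A : HQA) (xi : A) : bounded_elt A xi ->
  exists K, 0 <= K /\ forall x, A0 x -> hnorm (mul xi x) <= K * hnorm x.
Proof.
  intros [K HK]. exists (Rmax K 0). split. apply Rmax_r. intros x Hx.
  eapply Rle_trans. apply HK; auto. apply Rmult_le_compat_r. apply hnorm_ge0. apply Rmax_l.
Qed.

Lemma BND (A : HQA) (xi : A) : bounded_elt A xi -> bounded_elt A (star xi).
Proof.
  intros Hb. destruct (bounded_nonneg A xi Hb) as [K [HK Hb']].
  exists K. intros y Hy. apply NORMDUAL.
  { pose proof (hnorm_ge0 y); nra. }
  intros x Hx. rewrite Re_sym, <- F5 by auto.
  eapply Rle_trans. apply Rle_abs. eapply Rle_trans. apply CS_re.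
  pose proof (Hb' x Hx). pose proof (hnorm_ge0 y). pose proof (hnorm_ge0 x).
  pose proof (hnorm_ge0 (mul xi x)). nra.
Qed.

Lemma Rbound (A : HQA) (xi : A) : bounded_elt A xi ->
  exists K, 0 <= K /\ forall a, A0 a -> hnorm (mul a xi) <= K * hnorm a.
Proof.
  intro Hb. destruct (bounded_nonneg A _ (BND A xi Hb)) as [K [HK H]].
  exists K. split; auto. intros a Ha.
  rewrite <- hnorm_star, F7 by auto. rewrite <- (hnorm_star a). apply H. apply A0_star; auto.
Qed.

Lemma Rbound_conv (A : HQA) (xi : A) (K : R) :
  (forall a, A0 a -> hnorm (mul a (star xi)) <= K * hnorm a) -> bounded_elt A xi.
Proof.
  intro H. exists K. intros x Hx.
  rewrite <- (star_star _ xi) at 1. rewrite <- (star_star _ x) at 1.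
  rewrite <- F7 by (apply A0_star; auto). rewrite hnorm_star, <- (hnorm_star x).
  apply H. apply A0_star; auto.
Qed.

Lemma inv_small (eps : R) : 0 < eps -> exists N, forall n, (N <= n)%nat -> / INR (S n) < eps.
Proof.
  intro He. destruct (archimed_cor1 eps He) as [N [H1 H2]]. exists N. intros n Hn.
  eapply Rle_lt_trans; [|exact H1]. apply Rinv_le_contravar. apply lt_0_INR; auto.
  apply le_INR. lia.
Qed.

Lemma inv_pos (n : nat) : 0 < / INR (S n).
Proof. apply Rinv_0_lt_compat. apply lt_0_INR. lia. Qed.

Lemma BEXT (A : HQA) (g : A -> A) (K : R) : 0 <= K ->
  (forall a b, A0 a -> A0 b -> hnorm (g a -h g b) <= K * hnorm (a -h b)) ->
  exists T : A -> A, (forall a, A0 a -> T a = g a) /\ Lip T.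
Proof.
  intros HK Hg.
  assert (ap : forall (xi : A) (n : nat), {a : A | A0 a /\ hnorm (xi -h a) < / INR (S n)}).
  { intros xi n. apply constructive_indefinite_description. apply A0_dense. apply inv_pos. }
  set (af := fun xi n => proj1_sig (ap xi n)).
  assert (afA : forall xi n, A0 (af xi n)) by (intros; unfold af; destruct (ap xi n); simpl; tauto).
  assert (afd : forall xi n, hnorm (xi -h af xi n) < / INR (S n))
    by (intros; unfold af; destruct (ap xi n); simpl; tauto).
  assert (lim : forall xi, {l : A | forall eps, 0 < eps -> exists N, forall n, (N <= n)%nat ->
                     hnorm (g (af xi n) -h l) < eps}).
  { intro xi. apply constructive_indefinite_description. apply complete.
    intros eps Heps.
    destruct (inv_small (eps / (2 * K + 1))) as [N HN]. apply Rdiv_lt_0_compat; lra.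
    exists N. intros m n Hm Hn.
    change (hnorm (g (af xi m) -h g (af xi n)) < eps).
    eapply Rle_lt_trans. apply Hg; auto.
    pose proof (hnorm_sub_tri (af xi m) (af xi n) xi) as T.
    rewrite (hnorm_sub_sym (af xi m) xi) in T.
    pose proof (afd xi m). pose proof (afd xi n). pose proof (HN m Hm). pose proof (HN n Hn).
    assert (E : (2 * K + 1) * (eps / (2 * K + 1)) = eps) by (field; lra).
    assert (hnorm (af xi m -h af xi n) < 2 * (eps / (2 * K + 1))) by lra.
    assert (0 < eps / (2 * K + 1)) by (apply Rdiv_lt_0_compat; lra).
    assert (K * hnorm (af xi m -h af xi n) <= K * (2 * (eps / (2 * K + 1)))) by (apply Rmult_le_compat_l; lra).
    nra. }
  exists (fun xi => proj1_sig (lim xi)). split.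
  - intros a Ha. destruct (lim a) as [l Hl]. simpl.
    apply hsub_eq, hnorm_zero. apply Rle_antisym; [|apply hnorm_ge0].
    apply eps_le. intros eps Heps.
    destruct (Hl (eps / 2)) as [N1 HN1]. lra.
    destruct (inv_small (eps / (2 * K + 1))) as [N2 HN2]. apply Rdiv_lt_0_compat; lra.
    set (n := Nat.max N1 N2).
    specialize (HN1 n ltac:(unfold n; lia)). specialize (HN2 n ltac:(unfold n; lia)).
    pose proof (hnorm_sub_tri l (g a) (g (af a n))) as T.
    rewrite (hnorm_sub_sym l (g (af a n))) in T.
    pose proof (Hg _ _ (afA a n) Ha) as G. rewrite (hnorm_sub_sym (af a n) a) in G.
    pose proof (afd a n).
    assert (0 < eps / (2 * K + 1)) by (apply Rdiv_lt_0_compat; lra).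
    assert (K * hnorm (a -h af a n) <= K * (eps / (2 * K + 1))) by (apply Rmult_le_compat_l; lra).
    assert (K * (eps / (2 * K + 1)) <= eps / 2).
    { assert (E : (2 * K + 1) * (eps / (2 * K + 1)) = eps) by (field; lra). nra. }
    lra.
  - exists K. split; auto. intros u w.
    destruct (lim u) as [l1 Hl1]. destruct (lim w) as [l2 Hl2]. simpl.
    apply eps_le. intros eps Heps.
    destruct (Hl1 (eps / 3)) as [N1 HN1]. lra.
    destruct (Hl2 (eps / 3)) as [N2 HN2]. lra.
    destruct (inv_small (eps / (6 * K + 1))) as [N3 HN3]. apply Rdiv_lt_0_compat; lra.
    set (n := Nat.max N1 (Nat.max N2 N3)).
    specialize (HN1 n ltac:(unfold n; lia)). specialize (HN2 n ltac:(unfold n; lia)).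
    specialize (HN3 n ltac:(unfold n; lia)).
    set (a := af u n). set (b := af w n).
    pose proof (hnorm_sub_tri l1 l2 (g a)) as T1.
    pose proof (hnorm_sub_tri (g a) l2 (g b)) as T2.
    rewrite (hnorm_sub_sym l1 (g a)) in T1.
    pose proof (Hg a b (afA u n) (afA w n)) as G.
    pose proof (hnorm_sub_tri a b u) as T3.
    pose proof (hnorm_sub_tri u b w) as T4.
    rewrite (hnorm_sub_sym a u) in T3.
    pose proof (afd u n). pose proof (afd w n). fold a b in H, H0.
    assert (0 < eps / (6 * K + 1)) by (apply Rdiv_lt_0_compat; lra).
    assert (hnorm (a -h b) <= hnorm (u -h w) + 2 * (eps / (6 * K + 1))) by lra.
    assert (K * hnorm (a -h b) <= K * hnorm (u -h w) + K * (2 * (eps / (6 * K + 1))))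
      by (rewrite <- Rmult_plus_distr_l; apply Rmult_le_compat_l; lra).
    assert (K * (2 * (eps / (6 * K + 1))) <= eps / 3).
    { assert (E : (6 * K + 1) * (eps / (6 * K + 1)) = eps) by (field; lra). nra. }
    assert (X1: hnorm (l1 -h l2) <= hnorm (g a -h l1) + hnorm (g a -h g b) + hnorm (g b -h l2)) by lra. assert (X2 : hnorm (g a -h l1) < eps/3) by exact HN1. assert (X3 : hnorm (a -h b) <= hnorm (u -h w) + 2 * /INR (S n)) by lra. assert (X4 : hnorm (g b -h l2) < eps/3) by exact HN2. assert (X5: hnorm (l1 -h l2) <= eps/3 + K * hnorm (a -h b) + eps/3) by lra. lra.
Qed.

Lemma hadd_sub_l {A : HQA} (c d : A) : hadd c d -h c = d.
Proof. rewrite (haddC _ c d), <- haddA, haddN, hadd0. auto. Qed.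

Lemma hsub_self {A : HQA} (c : A) : c -h c = hzero.
Proof. apply haddN. Qed.

Lemma UBP (A : HQA) (I : Type) (v : I -> A) :
  (forall eta : A, exists Cb, forall i, Rabs (Cre (inner eta (v i))) <= Cb) ->
  exists M, forall i, hnorm (v i) <= M.
Proof.
  intro Hpt. apply NNPP. intro Hno.
  assert (Hunb : forall M, exists i, M < hnorm (v i)).
  { intro M. apply NNPP. intro Hn. apply Hno. exists M. intro i. apply Rnot_lt_le. intro Hl.
    apply Hn. exists i; auto. }
  assert (pick : forall M, {i | M < hnorm (v i)}).
  { intro M. apply constructive_indefinite_description. apply Hunb. }
  set (q := fun n : nat => (/4) ^ n).
  assert (qpos : forall n, 0 < q n) by (intro; unfold q; apply pow_lt; lra).
  assert (qS : forall n, q (S n) = / 4 * q n) by (intro; reflexivity).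
  set (thr := fun n : nat => 4 * (INR n + 1) / q n).
  set (w := fun n => v (proj1_sig (pick (thr n)))).
  assert (Hw : forall n, thr n < hnorm (w n)) by (intro n; unfold w; destruct (pick (thr n)); auto).
  assert (thrpos : forall n, 0 < thr n).
  { intro n. unfold thr. apply Rdiv_lt_0_compat; [|auto]. pose proof (pos_INR n). lra. }
  assert (Hwq : forall n, 4 * (INR n + 1) < q n * hnorm (w n)).
  { intro n. specialize (Hw n). unfold thr in Hw.
    apply Rmult_lt_compat_l with (r := q n) in Hw; auto.
    replace (q n * (4 * (INR n + 1) / q n)) with (4 * (INR n + 1)) in Hw by (field; specialize (qpos n); lra).
    exact Hw. }
  assert (wpos : forall n, 0 < hnorm (w n)) by (intro n; specialize (thrpos n); specialize (Hw n); lra).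
  set (sgn := fun (c : A) n => if Rle_dec 0 (Cre (inner c (w n))) then 1 else -1).
  set (coef := fun c n => sgn c n * q n / (2 * hnorm (w n))).
  set (step := fun n (c : A) => hadd c (hscal (mkC (coef c n) 0) (w n))).
  set (cs := fix cs (n : nat) : A := match n with O => hzero | S k => step k (cs k) end).
  assert (csS : forall n, cs (S n) = step n (cs n)) by reflexivity.
  assert (Ha : forall n, hnorm (cs (S n) -h cs n) = q n / 2).
  { intro n. rewrite csS. unfold step. rewrite hadd_sub_l, hnorm_scal.
    unfold coef, sgn. specialize (wpos n). specialize (qpos n).
    destruct (Rle_dec 0 (Cre (inner (cs n) (w n)))).
    - rewrite Rabs_right. field. lra. apply Rle_ge. apply Rmult_le_pos. lra.
      apply Rlt_le. apply Rinv_0_lt_compat. lra.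
    - rewrite Rabs_left. field. lra. apply Rmult_lt_reg_r with (2 * hnorm (w n)). lra.
      replace (-1 * q n / (2 * hnorm (w n)) * (2 * hnorm (w n))) with (- q n) by (field; lra). lra. }
  assert (Hb : forall n, q n * hnorm (w n) / 2 <= Rabs (Cre (inner (cs (S n)) (w n)))).
  { intro n. rewrite csS. unfold step. rewrite Re_addl, Re_scall, <- hnorm_sq.
    unfold coef, sgn. specialize (wpos n). specialize (qpos n).
    destruct (Rle_dec 0 (Cre (inner (cs n) (w n)))).
    - replace (1 * q n / (2 * hnorm (w n)) * (hnorm (w n) * hnorm (w n))) with (q n * hnorm (w n) / 2)
        by (field; lra).
      rewrite Rabs_right. lra. apply Rle_ge. assert (0 < q n * hnorm (w n) / 2) by (apply Rdiv_lt_0_compat; nra; lra). lra.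
    - replace (-1 * q n / (2 * hnorm (w n)) * (hnorm (w n) * hnorm (w n))) with (- (q n * hnorm (w n) / 2))
        by (field; lra).
      assert (0 < q n * hnorm (w n) / 2) by (apply Rdiv_lt_0_compat; nra; lra).
      rewrite Rabs_left. lra. lra. }
  assert (Hc : forall n k, hnorm (cs (n + k)%nat -h cs n) <= 2 / 3 * (q n - q (n + k)%nat)).
  { intros n k. induction k.
    - rewrite Nat.add_0_r, hsub_self, hnorm_hzero. lra.
    - replace (n + S k)%nat with (S (n + k)) by lia.
      eapply Rle_trans. apply (hnorm_sub_tri _ _ (cs (n + k)%nat)).
      rewrite Ha, qS. lra. }
  destruct (complete _ cs) as [l Hl].
  { intros eps Heps. destruct (pow_lt_1_zero (/4) ltac:(rewrite Rabs_right; lra) (eps / 2)) as [N HN].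
    lra. exists N. intros m n Hm Hn.
    change (hnorm (cs m -h cs n) < eps).
    eapply Rle_lt_trans. apply (hnorm_sub_tri _ _ (cs N)).
    rewrite (hnorm_sub_sym (cs N) (cs n)).
    replace m with (N + (m - N))%nat by lia. replace n with (N + (n - N))%nat by lia.
    pose proof (Hc N (m - N)%nat). pose proof (Hc N (n - N)%nat).
    pose proof (qpos (N + (m - N))%nat). pose proof (qpos (N + (n - N))%nat).
    specialize (HN N (le_n N)). rewrite Rabs_right in HN by (apply Rle_ge, Rlt_le, qpos).
    fold (q N) in HN. lra. }
  assert (He : forall n, hnorm (l -h cs n) <= 2 / 3 * q n).
  { intro n. apply eps_le. intros eps Heps. destruct (Hl eps Heps) as [N HN].
    specialize (HN (n + N)%nat ltac:(lia)). change (hnorm (cs (n + N)%nat -h l) < eps) in HN.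
    eapply Rle_trans. apply (hnorm_sub_tri _ _ (cs (n + N)%nat)).
    rewrite (hnorm_sub_sym l). pose proof (Hc n N). pose proof (qpos (n + N)%nat). lra. }
  destruct (Hpt l) as [Cb HC].
  destruct (INR_unbounded Cb) as [n Hn].
  specialize (HC (proj1_sig (pick (thr n)))). fold (w n) in HC.
  pose proof (Re_subl l (cs (S n)) (w n)) as R1.
  pose proof (CS_re (l -h cs (S n)) (w n)) as R2.
  pose proof (He (S n)) as R3. rewrite qS in R3.
  pose proof (Hb n) as R4. pose proof (Hwq n) as R5.
  pose proof (wpos n). pose proof (qpos n).
  assert (R6 : hnorm (l -h cs (S n)) * hnorm (w n) <= 2 / 3 * (/ 4 * q n) * hnorm (w n))
    by (apply Rmult_le_compat_r; lra).
  set (x1 := Cre (inner l (w n))) in *. set (x2 := Cre (inner (cs (S n)) (w n))) in *.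
  set (x3 := Cre (inner (l -h cs (S n)) (w n))) in *.
  assert (Rabs x2 <= Rabs x1 + Rabs x3).
  { replace x2 with (x1 - x3) by lra. eapply Rle_trans. apply Rabs_triang. rewrite Rabs_Ropp. lra. }
  assert (q n * hnorm (w n) / 3 <= Rabs x1) by nra.
  pose proof (pos_INR n). lra.
Qed.

Lemma UBP_family (A : HQA) (S : A -> A) : S hzero = hzero ->
  (forall eta, exists Cb, forall y, A0 y -> Rabs (Cre (inner eta (S y))) <= Cb * hnorm y) ->
  exists M, forall y, A0 y -> hnorm (S y) <= M * hnorm y.
Proof.
  intros HS0 Hpt.
  destruct (UBP A {y : A | A0 y /\ 0 < hnorm y}
              (fun i => hscal (mkC (/ hnorm (proj1_sig i)) 0) (S (proj1_sig i)))) as [M HM].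
  { intro eta. destruct (Hpt eta) as [Cb HCb]. exists Cb. intros [y [Hy Hn]]. simpl.
    rewrite Re_scalr, Rabs_mult, Rabs_right by (apply Rle_ge, Rlt_le, Rinv_0_lt_compat; auto).
    specialize (HCb y Hy).
    apply Rmult_le_reg_l with (hnorm y); auto.
    rewrite <- Rmult_assoc, Rinv_r by lra. lra. }
  exists M. intros y Hy. destruct (Req_dec (hnorm y) 0) as [H0|H0].
  - rewrite (hnorm_zero y H0), HS0, hnorm_hzero. lra.
  - assert (Hp : 0 < hnorm y) by (pose proof (hnorm_ge0 y); lra).
    specialize (HM (exist _ y (conj Hy Hp))). simpl in HM.
    rewrite hnorm_scal, Rabs_right in HM by (apply Rle_ge, Rlt_le, Rinv_0_lt_compat; auto).
    apply Rmult_le_compat_l with (r := hnorm y) in HM; [|lra].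
    rewrite <- Rmult_assoc, Rinv_r in HM by lra. lra.
Qed.

Theorem mainTheorem10 (A : HQA) (e : A) (he : is_unit A e) :
  (forall xi : A, bounded_elt A xi <-> (forall eta : A, left_mult A eta xi)) /\
  (forall xi : A, bounded_elt A xi <-> (forall eta : A, left_mult A xi eta)).
Proof.
  destruct he as [He Hu].
  assert (Z0 : A0 (@hzero A)) by apply A0_zero.
  split; intro xi; split.
  -
    intros Hb eta. destruct (Rbound A xi Hb) as [K [HK HR]].
    destruct (BEXT A (fun a => mul a xi) K HK) as [T [HT LT]].
    { intros a b Ha Hb'. rewrite <- F2 by auto. apply HR. apply A0_sub; auto. }
    exists (T eta). intros x y Hx Hy. revert eta.
    pose proof (EXT_inner (fun u => mul (star u) y) (fun u => mul (T u) x) (mul xi x) y false true) as E.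
    simpl in E. apply E.
    + apply (Lip_comp (fun u => mul u y) (fun u => star u)). apply Lip_mulr; auto. apply Lip_star.
    + apply (Lip_comp (fun u => mul u x) T). apply Lip_mulr; auto. auto.
    + intros a Ha. rewrite HT, F4, (F6 a) by auto. reflexivity.
  -
    intros Hm.
    destruct (UBP_family A (fun y => mul y (star xi))) as [M HM].
    { pose proof (F2 (star xi) hzero hzero Z0 Z0) as E. rewrite hsub_self in E. rewrite E. apply hsub_self. }
    { intro eta. destruct (Hm eta) as [z Hz]. exists (hnorm z). intros y Hy.
      specialize (Hz e y He Hy). rewrite (proj1 (Hu xi)), (proj1 (Hu z)), F8 in Hz by auto.
      rewrite Hz. apply CS_re. }
    apply (Rbound_conv A xi M). auto.
  -
    intros Hb eta. destruct (bounded_nonneg A xi Hb) as [K [HK HL]].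
    destruct (BEXT A (fun a => mul xi a) K HK) as [T [HT LT]].
    { intros a b Ha Hb'. rewrite <- F1 by auto. apply HL. apply A0_sub; auto. }
    exists (T eta). intros x y Hx Hy. revert eta.
    pose proof (EXT_inner (fun u => mul u x) (fun u => mul (T u) x) (mul (star xi) y) y true true) as E.
    simpl in E. apply E.
    + apply Lip_mulr; auto.
    + apply (Lip_comp (fun u => mul u x) T). apply Lip_mulr; auto. auto.
    + intros a Ha. rewrite HT, F3, (F5 xi (mul a x)) by (auto; apply A0_mul; auto). reflexivity.
  -
    intros Hm.
    destruct (UBP_family A (fun y => mul (star xi) y)) as [M HM].
    { pose proof (F1 (star xi) hzero hzero Z0 Z0) as E. rewrite hsub_self in E. rewrite E. apply hsub_self. }
    { intro eta. destruct (Hm eta) as [z Hz]. exists (hnorm z). intros y Hy.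
      specialize (Hz e y He Hy). rewrite (proj1 (Hu eta)), (proj1 (Hu z)) in Hz.
      rewrite Hz. apply CS_re. }
    rewrite <- (star_star _ xi). apply BND. exists M. auto.
Qed.
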